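(* Let $p>q>0$ be relatively prime integers with Hirzebruch–Jung continued fraction expansion $p/q=[a_1,\ldots,a_n]$, $a_i\geq 2$, and let \[ S = \sum_{i:\,a_i>3} (a_i-3). \] If $S > 2p/9$, then at most two of the $a_i$ are greater than $3$.
   Context: The Hirzebruch–Jung continued fraction $[a_1,\ldots,a_n]$ denotes $a_1 - 1/(a_2 - 1/(\cdots - 1/a_n))$; it is computed recursively by $p_1/q_1=p/q$, $p_i/q_i = a_i - q_{i+1}/p_{i+1}$ with $p_{i+1}=q_i$ and $0<q_{i+1}<p_{i+1}$. *)

(* Defs.v *)
From mathcomp Require Import all_boot all_order all_algebra.
Set Implicit Arguments. Unset Strict Implicit. Unset Printing Implicit Defensive.
Import Order.TTheory GRing.Theory Num.Theory.
Local Open Scope ring_scope.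

(* Hirzebruch-Jung continued fraction [a_1,...,a_n] = a_1 - 1/(a_2 - 1/(... - 1/a_n)),
   evaluated in rat.  The empty list is given the (irrelevant) value 0. *)
Fixpoint hj (s : seq nat) : rat :=
  match s with
  | [::] => 0
  | [:: a] => a%:R
  | a :: t => a%:R - (hj t)^-1
  end.

Definition excess (s : seq nat) : nat := (\sum_(a <- s | 3 < a) (a - 3))%N.

(* Main.v *)
Require Import Defs.
From mathcomp Require Import all_boot all_order all_algebra.
From mathcomp Require Import zify ring lra.
Import Order.TTheory GRing.Theory Num.Theory.
Local Open Scope ring_scope.

Fixpoint kp (s : seq nat) : nat * nat :=
  match s with
  | [::] => (1%N, 0%N)
  | a :: t => let: (x, y) := kp t in (a * x - y, x)%N
  end.

Fixpoint pm1 (s : seq nat) : nat :=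
  match s with
  | [::] => 1%N
  | a :: t => ((a - 1) * pm1 t)%N
  end.

Lemma excess_cons a s : excess (a :: s) = ((if (3 < a)%N then a - 3 else 0) + excess s)%N.
Proof. by rewrite /excess big_cons; case: ifP. Qed.

Lemma kp_inv s : all (fun x => 2 <= x)%N s ->
  let: (x, y) := kp s in
  [/\ (y < x)%N, coprime x y, (pm1 s <= x)%N &
      (s != [::] -> hj s = (x%:R / y%:R : rat))].
Proof.
elim: s => [|a t IH] /=; first by split.
case/andP=> Ha Ht; move: (IH Ht); case Ek: (kp t) => [x y] [Hyx Hc Hp Hh].
split.
- nia.
- rewrite coprime_sym /coprime.
  have -> : (a * x - y = (a - 1) * x + (x - y))%N by nia.
  rewrite gcdnMDl gcdnC.
  have E1 : x = (y + (x - y))%N by lia.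
  rewrite {2}E1 gcdnDr gcdnC.
  have E2 : x = ((x - y) + y)%N by lia.
  by move: Hc; rewrite /coprime gcdnC {1}E2 gcdnDr.
- have: ((a - 1) * pm1 t <= (a - 1) * x)%N by rewrite leq_mul2l Hp orbT.
  nia.
- move=> _. case: t Ht IH Ek Hyx Hc Hp Hh => [|b t] Ht IH Ek Hyx Hc Hp Hh.
  + case: Ek => <- <- /=.
    by rewrite muln1 subn0 divr1.
  + rewrite -/(hj (b :: t)) Hh // invf_div.
    have Hx0 : (x%:R : rat) != 0 by rewrite pnatr_eq0 -lt0n; apply: leq_ltn_trans Hyx.
    rewrite natrB; last by nia.
    rewrite natrM; apply/eqP; rewrite eq_sym -subr_eq0; apply/eqP.
    field; exact: Hx0.
Qed.

Lemma comb s : all (fun x => 2 <= x)%N s ->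
  let m := count (fun x => 3 < x)%N s in let E := excess s in let P := pm1 s in
  [/\ (1 <= P)%N, ((m <= E)%N /\ (m = 0%N -> E = 0%N)), ((1 <= m)%N -> (E + 2 <= P)%N),
      ((2 <= m)%N -> (3 * E <= P)%N) & ((3 <= m)%N -> (6 * E <= P)%N)].
Proof.
elim: s => [|a t IH] /=; first by rewrite /excess big_nil.
case/andP=> Ha Ht; move: (IH Ht) => [H1 [H2 H0] H3 H4 H5].
rewrite excess_cons.
move: H1 H2 H0 H3 H4 H5.
set m := count _ t; set E := excess t; set P := pm1 t => H1 H2 H0 H3 H4 H5.
case: (ltnP 3 a) => Ha3 /=.
- set c := (a - 3)%N.
  have Hac : (a - 1 = c + 2)%N by rewrite /c; lia.
  rewrite Hac.
  have Hc : (1 <= c)%N by rewrite /c; lia.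
  split.
  + nia.
  + split; lia.
  + move=> _. case: (posnP m) => Hm.
    * rewrite (H0 Hm); nia.
    * have := H3 Hm; nia.
  + move=> Hm. have Hm1 : (1 <= m)%N by lia. have := H3 Hm1. nia.
  + move=> Hm. have Hm2 : (2 <= m)%N by lia. have := H4 Hm2. nia.
- rewrite add0n; split.
  + nia.
  + split; lia.
  + move=> Hm; have := H3 Hm; nia.
  + move=> Hm; have := H4 Hm; nia.
  + move=> Hm; have := H5 Hm; nia.
Qed.

Theorem mainTheorem8 (p q : nat) (a : seq nat) :
  (0 < q)%N -> (q < p)%N -> coprime p q ->
  a != [::] -> all (fun x => 2 <= x)%N a ->
  hj a = (p%:R / q%:R : rat) ->
  (9 * excess a > 2 * p)%N ->
  (count (fun x => 3 < x)%N a <= 2)%N.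
Proof.
move=> q0 qp cop an0 Hall Hhj H9.
rewrite leqNgt; apply/negP => Hm.
have := kp_inv a Hall; case Ek: (kp a) => [x y] [Hyx Hc Hp Hh].
have [_ _ _ _ H5] := comb a Hall.
have H6 := H5 Hm.
move: (Hh an0); rewrite Hhj => E.
have q0' : (q%:R : rat) != 0 by rewrite pnatr_eq0 -lt0n.
have p0' : (p%:R : rat) != 0 by rewrite pnatr_eq0 -lt0n; lia.
have y0 : (y%:R : rat) != 0.
  apply/negP => /eqP y0; move: E; rewrite y0 invr0 mulr0 => /eqP.
  by rewrite mulf_eq0 invr_eq0 (negbTE p0') (negbTE q0').
have E2 : ((p * y)%N%:R : rat) = (x * q)%N%:R.
  rewrite !natrM.
  have := E; move/(congr1 (fun z => z * q%:R * y%:R)).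
  rewrite mulfVK // => ->.
  by rewrite mulrAC mulfVK.
move/eqP: E2; rewrite eqr_nat => /eqP E2.
have Hd : (x %| p)%N.
  by rewrite -(Gauss_dvdl p Hc) E2 dvdn_mulr.
have := dvdn_leq (ltn_trans q0 qp) Hd.
lia.
Qed.
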